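(* Let $\mathcal T=(S,\Sigma,\kappa)$ be an STS, let $B\in\Sigma$, let $n\ge0$ and $\mathcal A=(A_0,\dots,A_n)\in\Sigma^{n+1}$, and let $p>0$. Assume that for every $\nu\in\mathrm{Dist}(S)$ such that $\nu_{\mathcal A}$ is well-defined, $\mathbb P^{\mathcal T}_{\nu_{\mathcal A}}(\mathbf F B)\ge p$. Then for every $\mu\in\mathrm{Dist}(S)$, $$\mathbb P^{\mathcal T}_\mu(\mathbf G\overline B\wedge\mathbf{GF}\phi_{\mathcal A})=0.$$ (In particular, for $n=0$ and $\mathcal A=(A)$: if $\mathbb P^{\mathcal T}_{\delta_s}(\mathbf F B)\ge p$ for all $s\in A$, then $\mathbb P^{\mathcal T}_\mu(\mathbf G\overline B\wedge\mathbf{GF}A)=0$ for all $\mu$.)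
   Context: A stochastic transition system (STS) is a triple $\mathcal T=(S,\Sigma,\kappa)$ where $(S,\Sigma)$ is a measurable space and $\kappa:S\times\Sigma\to[0,1]$ is a Markov kernel. $\mathrm{Dist}(S)$ is the set of probability distributions on $(S,\Sigma)$, $\delta_s$ the Dirac distribution at $s$. Runs are elements of $S^\omega$; $\mathrm{Cyl}(A_0,\dots,A_k)=\{s_0s_1\ldots: s_j\in A_j,\ 0\le j\le k\}$; $\mathbb P^{\mathcal T}_\mu$ is the probability measure on runs (with the $\sigma$-algebra generated by cylinders) induced by initial distribution $\mu$ and kernel $\kappa$. For a run $\rho=s_0s_1\ldots$, $\rho_{\ge k}=s_ks_{k+1}\ldots$. Notation: $\overline B=S\setminus B$; $\mathbf F B$ is the set of runs visiting $B$ at some step; $\mathbf G B$ the set of runs all of whose states lie in $B$; $\mathbf{GF}B$ the set of runs visiting $B$ infinitely often. For $\mathcal A=(A_0,\dots,A_n)\in\Sigma^{n+1}$, $\phi_{\mathcal A}$ is the set of runs $\rho$ with $s_j\in A_j$ for $0\le j\le n$, and $\mathbf{GF}\phi_{\mathcal A}$ is the set of runs $\rho$ such that $\rho_{\ge k}\in\phi_{\mathcal A}$ for infinitely many $k$. Conditional distribution: for $\nu\in\mathrm{Dist}(S)$ with $\mathbb P^{\mathcal T}_\nu(\mathrm{Cyl}(A_0,\dots,A_n))>0$, $\nu_{\mathcal A}$ is said to be well-defined and is the distribution $C\mapsto \mathbb P^{\mathcal T}_\nu(\mathrm{Cyl}(A_0,\dots,A_{n-1},A_n\cap C))/\mathbb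 P^{\mathcal T}_\nu(\mathrm{Cyl}(A_0,\dots,A_n))$ (the distribution of the state at step $n$ conditioned on $\phi_{\mathcal A}$); for a single set $A$ with $\nu(A)>0$, $\nu_A=\nu(\cdot\cap A)/\nu(A)$. *)

(* Defs.v *)
From HB Require Import structures.
From mathcomp Require Import all_boot all_order all_algebra.
From mathcomp Require Import all_classical all_reals all_analysis.
Set Implicit Arguments. Unset Strict Implicit. Unset Printing Implicit Defensive.
Import Order.TTheory GRing.Theory Num.Theory.
Local Open Scope classical_set_scope.
Local Open Scope ring_scope.

(* A stochastic transition system (S, Sigma, kappa) is given by a
   measurableType S (with display d) together with a probability kernel
   kappa : R.-pker S ~> S. *)

Definition run (S : Type) := nat -> S.

Definition cyl (S : Type) (k : nat) (A : nat -> set S) : set (run S) :=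
  [set rho | forall j, (j <= k)%N -> A j (rho j)].

Definition cylinders d (S : measurableType d) : set (set (run S)) :=
  [set C | exists k (A : nat -> set S), (forall j, measurable (A j)) /\ C = cyl k A].

Definition runT d (S : measurableType d) := g_sigma_algebraType (@cylinders d S).

Definition shiftA (S : Type) (A : nat -> set S) : nat -> set S := fun j => A j.+1.

(* tailp kappa A n s = probability, starting in s, that the next n states
   lie in A 1, ..., A n respectively:
   tailp A 0 s = 1 ;
   tailp A (n+1) s = \int_{A 1} tailp (shift A) n  d kappa(s, .) *)
Fixpoint tailp d (S : measurableType d) (R : realType) (kappa : R.-pker S ~> S)
  (n : nat) (A : nat -> set S) (s : S) {struct n} : \bar R :=
  match n with
  | 0 => 1%E
  | n'.+1 => (\int[kappa s]_(x in A 1%N) tailp kappa n' (shiftA A) x)%E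
  end.

(* P is the run measure P^T_mu induced by the initial distribution mu and kernel
   kappa: its value on every cylinder is
   \int_{A_0} mu(ds_0) \int_{A_1} kappa(s_0,ds_1) ... kappa(s_{k-1}, A_k).
   (By the pi-lambda theorem this determines P uniquely on the cylinder
   sigma-algebra, and such P exists by Ionescu-Tulcea.) *)
Definition is_run_measure d (S : measurableType d) (R : realType)
  (kappa : R.-pker S ~> S) (mu : probability S R) (P : probability (runT S) R) :=
  forall (k : nat) (A : nat -> set S), (forall j, measurable (A j)) ->
    P (cyl k A) = (\int[mu]_(x in A 0%N) tailp kappa k A x)%E.

Definition evF (S : Type) (B : set S) : set (run S) := [set rho | exists k, B (rho k)].
Definition evG (S : Type) (B : set S) : set (run S) := [set rho | forall k, B (rho k)].
Definition suffix (S : Type) (rho : run S) (k : nat) : run S := fun i => rho (i + k)%N.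
Definition evGF (S : Type) (phi : set (run S)) : set (run S) :=
  [set rho | forall m, exists2 k, (m <= k)%N & phi (suffix rho k)].

Definition capLast (S : Type) (n : nat) (A : nat -> set S) (C : set S) : nat -> set S :=
  fun j => if j == n then A j `&` C else A j.

(* nuA is the conditional distribution nu_A of the state at step n given
   phi_A, where Pnu is the run measure of nu (only meaningful when
   Pnu(Cyl(A_0..A_n)) > 0, i.e. nu_A well-defined). *)
Definition is_cond_dist d (S : measurableType d) (R : realType)
  (n : nat) (A : nat -> set S) (Pnu : probability (runT S) R) (nuA : probability S R) :=
  forall C, measurable C ->
    nuA C = (Pnu (cyl n (capLast n A C)) / Pnu (cyl n A))%E.

(* Main.v *)
Require Import Defs.
From HB Require Import structures.
From mathcomp Require Import all_boot all_order all_algebra.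
From mathcomp Require Import all_classical all_reals all_analysis.
From mathcomp Require Import measurable_realfun.
Import Order.TTheory GRing.Theory Num.Theory.
Local Open Scope classical_set_scope.
Local Open Scope ring_scope.
Set Implicit Arguments. Unset Strict Implicit. Unset Printing Implicit Defensive.
From mathcomp Require Import ring lra.
Section integral_mrestr.
Context d (T : measurableType d) (R : realType).
Local Open Scope ereal_scope.
Lemma integral_mrestr (mu : {measure set T -> \bar R}) (A D : set T)
  (mA : measurable A) (mD : measurable D) (f : T -> \bar R) :
  (forall x, 0 <= f x) -> measurable_fun setT f ->
  \int[mrestr mu mA]_(x in D) f x = \int[mu]_(x in D `&` A) f x.
Proof.
move=> f0 mf.
have DE : D = (D `&` A) `|` (D `\` A).
  by apply/seteqP; split => x; [case: (pselect (A x)) => Ax Dx; [left|right]|case=> -[]].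
rewrite [in LHS]DE ge0_integral_setU //; last first.
- by rewrite disj_set2E; apply/eqP/seteqP; split => x // -[[_ ?] [_ ?]].
- exact: measurable_funTS.
- exact: measurableD.
- exact: measurableI.
rewrite (@null_set_integral _ _ _ (mrestr mu mA) (D `\` A)); first last.
- change (mu ((D `\` A) `&` A) = 0).
  by rewrite (_ : _ `&` _ = set0) ?measure0//; apply/seteqP; split => x // -[[_ ?] ?].
- exact: measurable_funTS.
- exact: measurableD.
rewrite adde0; apply: eq_measure_integral => B mB BDA.
by change (mu (B `&` A) = mu B); rewrite setIidl// => x /BDA [].
Qed.
End integral_mrestr.
Section kconst.
Context d (S : measurableType d) (R : realType) (nu : {measure set S -> \bar R})
  (hnu : (nu setT < +oo)%E).
Definition kconst (_ : (nu setT < +oo)%E) : S -> {measure set S -> \bar R} := fun _ => nu.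
Let mk U (mU : measurable U) : measurable_fun [set: S] (fun x => (kconst hnu x U : \bar R)).
Proof. rewrite /kconst; exact: measurable_cst. Qed.
HB.instance Definition _ := isKernel.Build _ _ S S R (kconst hnu) mk.
Let uub : measure_fam_uub (kconst hnu).
Proof.
exists (fine (nu setT) + 1)%R => x; rewrite /kconst.
have hf : (nu setT \is a fin_num)%E by rewrite ge0_fin_numE// measure_ge0.
by rewrite -(fineK hf) lte_fin ltrDl.
Qed.
HB.instance Definition _ := Kernel_isFinite.Build _ _ S S R (kconst hnu) uub.
End kconst.

Section krestr.
Context d (S : measurableType d) (R : realType) (kappa : R.-pker S ~> S)
  (C : set S) (mC : measurable C).
Definition krestr : S * S -> {measure set S -> \bar R} :=
  fun xy => mrestr (kappa xy.2) mC.
Let mk U (mU : measurable U) : measurable_fun [set: S * S] (fun x => (krestr x U : \bar R)).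
Proof.
rewrite /krestr /mrestr /=.
apply: (measurableT_comp (f := fun y => kappa y (U `&` C)) (g := snd)).
  exact/measurable_kernel/measurableI.
exact: measurable_snd.
Qed.
HB.instance Definition _ := isKernel.Build _ _ (S * S)%type S R krestr mk.
Let uub : measure_fam_uub krestr.
Proof.
exists 2%R => xy; rewrite /krestr /mrestr /=.
apply: (le_lt_trans (y := kappa xy.2 setT)).
  by apply: le_measure; rewrite ?inE//; exact: measurableI.
by rewrite prob_kernel lte1n.
Qed.
HB.instance Definition _ := Kernel_isFinite.Build _ _ _ S R krestr uub.
End krestr.

Section KC.
Context d (S : measurableType d) (R : realType) (kappa : R.-pker S ~> S).
Local Open Scope ereal_scope.

Lemma KC (nu : {measure set S -> \bar R}) (hnu : nu setT < +oo)
  (C : set S) (mC : measurable C) :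
  exists nu' : {measure set S -> \bar R}, nu' setT < +oo /\
   (forall f, (forall x, 0 <= f x) -> measurable_fun setT f ->
      \int[nu']_x f x = \int[nu]_y \int[kappa y]_(x in C) f x).
Proof.
pose l := kconst hnu. pose k := krestr kappa mC.
exists (mkcomp l k point); split.
  rewrite /= /kcomp /=.
  have -> : \int[l point]_y k (point, y) [set: S] = \int[nu]_y kappa y C.
    by apply: eq_integral => y _; change (kappa y (setT `&` C) = kappa y C); rewrite setTI.
  apply: (@le_lt_trans _ _ (\int[nu]_y (cst 1 y))).
    apply: (@ge0_le_integral _ _ _ nu setT measurableT (fun y => kappa y C) (fun y => cst 1 y)) => //.
    - exact: measurable_kernel.
    - move=> y _.
      apply: (@le_trans _ _ (kappa y setT)).
        by apply: le_measure; rewrite ?inE//.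
      by rewrite prob_kernel.
  by rewrite integral_cst// mul1e.
move=> f f0 mf.
rewrite integral_kcomp//=.
apply: eq_integral => y _.
by rewrite integral_mrestr// setTI.
Qed.
End KC.
Section nest.
Context d (S : measurableType d) (R : realType) (kappa : R.-pker S ~> S).
Local Open Scope ereal_scope.

Fixpoint nest (t : nat) (X : nat -> set S) (g : S -> \bar R) (s : S) {struct t} : \bar R :=
  match t with
  | 0 => g s
  | t'.+1 => \int[kappa s]_(x in X 1%N) nest t' (shiftA X) g x
  end.

Lemma nest_ge0 t X g : (forall x, 0 <= g x) -> forall s, 0 <= nest t X g s.
Proof.
move=> g0; elim: t X => [|t IH] X s /=; first exact: g0.
by apply: integral_ge0 => x _; exact: IH.
Qed.

Lemma nest_meas t X g : (forall i, measurable (X i)) -> (forall x, 0 <= g x) ->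
  measurable_fun setT g -> measurable_fun setT (nest t X g).
Proof.
move=> + g0 mg; elim: t X => [|t IH] X mX //=.
under eq_fun do rewrite integral_mkcond.
apply: measurable_fun_integral_kernel.
- by move=> U mU; exact: measurable_kernel.
- by move=> z; rewrite /patch; case: ifP => // _; exact: nest_ge0.
- apply/(measurable_restrictT _ (mX 1%N)).
  by apply: measurable_funTS; apply: IH => i; exact: mX.
Qed.

Lemma tailp_nest t j X s : tailp kappa (t + j) X s =
  nest t X (tailp kappa j (fun i => X (i + t)%N)) s.
Proof.
elim: t X s => [|t IH] X s /=.
  by congr (tailp _ _ _ _); apply/funext => i; rewrite addn0.
rewrite ?addSn /=; apply: eq_integral => x _; rewrite IH.
by congr (nest _ _ (tailp _ _ _) _); apply/funext => i; rewrite /shiftA addnS.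
Qed.

Lemma tailp_nest1 j X : tailp kappa j X = nest j X (fun _ => 1).
Proof. by apply/funext => s; rewrite -[j in LHS]addn0 tailp_nest. Qed.

Lemma tailp_ge0 j X s : 0 <= tailp kappa j X s.
Proof. by rewrite tailp_nest1; apply: nest_ge0. Qed.

Lemma tailp_meas j X : (forall i, measurable (X i)) ->
  measurable_fun setT (tailp kappa j X).
Proof.
by move=> mX; rewrite tailp_nest1; apply: nest_meas => //; exact: measurable_cst.
Qed.

Lemma nest_capLast t X D g s :
  nest t.+1 (capLast t.+1 X D) g s = nest t.+1 X (fun x => g x * (\1_D x)%:E) s.
Proof.
elim: t X s => [|t IH] X s.
  rewrite /= /capLast /= integral_mkcondr; apply: eq_integral => x _.
  by rewrite /patch indicE; case: (x \in D); rewrite ?mule1 ?mule0.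
change (\int[kappa s]_(x in capLast t.+2 X D 1%N) nest t.+1 (shiftA (capLast t.+2 X D)) g x = \int[kappa s]_(x in X 1%N) nest t.+1 (shiftA X) (fun x => g x * (\1_D x)%:E) x).
have -> : capLast t.+2 X D 1%N = X 1%N by [].
by apply: eq_integral => x _; rewrite -IH; congr (nest _ _ _ _).
Qed.

End nest.
Section NEST.
Context d (S : measurableType d) (R : realType) (kappa : R.-pker S ~> S).
Local Open Scope ereal_scope.

Lemma meas_int_kernel (C : set S) (mC : measurable C) (f : S -> \bar R) :
  (forall x, 0 <= f x) -> measurable_fun setT f ->
  measurable_fun setT (fun x => \int[kappa x]_(y in C) f y).
Proof.
move=> f0 mf; under eq_fun do rewrite integral_mkcond.
apply: measurable_fun_integral_kernel.
- by move=> U mU; exact: measurable_kernel.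
- by move=> z; rewrite /patch; case: ifP => // _; exact: f0.
- by apply/(measurable_restrictT _ mC); exact: measurable_funTS.
Qed.

Lemma NEST t : forall X, (forall i, measurable (X i)) ->
  forall (mu m : {measure set S -> \bar R}), mu setT < +oo ->
  (forall D, measurable D ->
     m D = \int[mu]_(x in X 0%N) nest kappa t X (fun y => (\1_D y)%:E) x) ->
  forall g, (forall x, 0 <= g x) -> measurable_fun setT g ->
  \int[m]_x g x = \int[mu]_(x in X 0%N) nest kappa t X g x.
Proof.
elim: t => [|t IH] X mX mu m hmu hm g g0 mg.
  rewrite /=; transitivity (\int[mrestr mu (mX 0%N)]_x g x).
    apply: eq_measure_integral => A mA _.
    by rewrite hm//= integral_indic.
  by rewrite integral_mrestr// setTI.
have mrfin : mrestr mu (mX 0%N) setT < +oo.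
  apply: (@le_lt_trans _ _ (mu setT)) => //.
  by apply: le_measure; rewrite ?inE//; exact: measurableI.
have [nu' [hnu' Hnu']] := KC kappa mrfin (mX 1%N).
have key f : (forall x, 0 <= f x) -> measurable_fun setT f ->
   \int[nu']_(x in X 1%N) f x = \int[mu]_(x in X 0%N) \int[kappa x]_(y in X 1%N) f y.
  move=> f0 mf; rewrite integral_mkcond Hnu'; first last.
  - by apply/(measurable_restrictT _ (mX 1%N)); exact: measurable_funTS.
  - by move=> z; rewrite /patch; case: ifP => // _; exact: f0.
  rewrite integral_mrestr; first last.
  - apply: meas_int_kernel; first exact: (mX 1%N).
      by move=> z; rewrite /patch; case: ifP => // _; exact: f0.
    by apply/(measurable_restrictT _ (mX 1%N)); exact: measurable_funTS.
  - by move=> x; apply: integral_ge0 => y _; rewrite /patch; case: ifP => // _; exact: f0.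
  - by [].
  rewrite setTI; apply: eq_integral => x _; apply: eq_integral => y.
  by rewrite inE => y1; rewrite /patch mem_set.
have nm h : (forall x, 0 <= h x) -> measurable_fun setT h -> measurable_fun setT (nest kappa t (shiftA X) h).
  by move=> h0 mh; apply: nest_meas => // i; exact: mX.
rewrite [RHS]/= -key; first last.
- exact: nm.
- by move=> x; exact: nest_ge0.
apply: (IH (shiftA X)) => //.
  by move=> i; exact: mX.
move=> D mD; rewrite hm// key//=.
- by move=> x; apply: nest_ge0 => y; rewrite lee_fin.
- apply: nm; first by move=> y; rewrite lee_fin.
  by apply/measurable_EFinP; exact: measurable_indic.
Qed.

End NEST.
Section runs.
Context d (S : measurableType d).

Definition pre (t : nat) (C : nat -> set S) : set (run S) :=
  [set rho | forall i, (i < t)%N -> C i (rho i)].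
Definition shiftset (t : nat) (W : set (run S)) : set (run S) :=
  [set rho | W (Defs.suffix rho t)].
Definition padA (n : nat) (A : nat -> set S) : nat -> set S :=
  fun j => if (j <= n)%N then A j else setT.

Lemma cyl_pad n A : cyl n (padA n A) = cyl n A.
Proof.
apply/seteqP; split => rho H j jn; have := H j jn; rewrite /padA jn //.
Qed.

Lemma padA_meas n A : (forall j, (j <= n)%N -> measurable (A j)) ->
  forall j, measurable (padA n A j).
Proof. by move=> mA j; rewrite /padA; case: ifP => // /mA. Qed.

Lemma meas_cyl k A : (forall j, measurable (A j)) ->
  measurable (cyl k A : set (runT S)).
Proof. by move=> mA; apply: sub_sigma_algebra; exists k, A. Qed.

Lemma meas_cyl' k A : (forall j, (j <= k)%N -> measurable (A j)) ->
  measurable (cyl k A : set (runT S)).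
Proof. by move=> mA; rewrite -cyl_pad; apply: meas_cyl; exact: padA_meas. Qed.

Lemma pre_cyl t C : pre t.+1 C = cyl t C.
Proof. by apply/seteqP; split => rho H i hi; apply: H. Qed.

Lemma pre0 C : pre 0 C = setT.
Proof. by apply/seteqP; split => rho. Qed.

Lemma meas_pre t C : (forall i, measurable (C i)) -> measurable (pre t C : set (runT S)).
Proof. by case: t => [|t] mC; rewrite ?pre0 ?pre_cyl//; exact: meas_cyl. Qed.

Lemma meas_eval t : measurable_fun [set: runT S] (fun rho : runT S => (rho t : S)).
Proof.
move=> _ D mD; rewrite setTI.
have -> : (fun rho : runT S => (rho t : S)) @^-1` D =
   cyl t (fun i => if i == t then D else setT).
  apply/seteqP; split => rho /=.
    by move=> Dt j _; case: ifP => // /eqP ->.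
  by move=> /(_ t (leqnn t)); rewrite eqxx.
by apply: meas_cyl => j; case: ifP.
Qed.

End runs.

Section pushev.
Context d (S : measurableType d) (R : realType) (Q : {measure set (runT S) -> \bar R}) (t : nat).
Local Open Scope ereal_scope.
Definition pushev : set S -> \bar R := fun A => Q ((fun rho : runT S => (rho t : S)) @^-1` A).

Let mf := @meas_eval _ S t.
Let pushev0 : pushev set0 = 0.
Proof. by rewrite /pushev preimage_set0 measure0. Qed.

Let pushev_ge0 A : 0 <= pushev A.
Proof. exact: measure_ge0. Qed.

Let pushev_sigma_additive : semi_sigma_additive pushev.
Proof.
move=> F mF tF mUF; rewrite /pushev preimage_bigcup.
apply: measure_semi_sigma_additive.
- by move=> n; rewrite -[X in measurable X]setTI; exact: mf.
- apply/trivIsetP => /= i j _ _ ij; rewrite -preimage_setI.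
  by move/trivIsetP : tF => /(_ _ _ _ _ ij) ->//; rewrite preimage_set0.
- by rewrite -preimage_bigcup -[X in measurable X]setTI; exact: mf.
Qed.

HB.instance Definition _ := isMeasure.Build _ _ _
  pushev pushev0 pushev_ge0 pushev_sigma_additive.

Lemma integral_pushev (f : S -> \bar R) : (forall x, 0 <= f x) -> measurable_fun setT f ->
  \int[pushev]_x f x = \int[Q]_rho f (rho t).
Proof.
move=> f0 mfn.
have -> : \int[pushev]_x f x = \int[pushforward Q (fun rho : runT S => (rho t : S))]_x f x.
  by apply: eq_measure_integral.
by rewrite ge0_integral_pushforward// preimage_setT.
Qed.
End pushev.

Section FM.
Context d (S : measurableType d) (R : realType) (kappa : R.-pker S ~> S).
Context (mu : probability S R) (P : probability (runT S) R)
  (HP : is_run_measure kappa mu P).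
Local Open Scope ereal_scope.

Lemma capLast_meas t (X : nat -> set S) (D : set S) : (forall i, measurable (X i)) -> measurable D ->
  forall i, measurable (capLast t X D i).
Proof. by move=> mX mD i; rewrite /capLast; case: ifP => _ //; exact: measurableI. Qed.

Lemma FM t j X : (forall i, measurable (X i)) ->
  P (cyl (t + j) X) =
  \int[P]_(rho in cyl t X) tailp kappa j (fun i => X (i + t)%N) (rho t).
Proof.
move=> mX; rewrite HP//.
under eq_integral do rewrite tailp_nest.
set h := tailp kappa j _.
have h0 x : 0 <= h x by exact: tailp_ge0.
have mh : measurable_fun setT h by apply: tailp_meas => i; exact: mX.
have mc := meas_cyl t mX.
rewrite -(setTI (cyl t X)) -integral_mrestr//; last first.
  exact: (measurableT_comp mh (@meas_eval _ S t)).
rewrite -integral_pushev//.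
symmetry; apply: (@NEST _ _ _ kappa t X mX) => //.
  by apply: (@le_lt_trans _ _ 1%E); [exact: probability_le1|exact: ltry].
move=> D mD.
change (P ((fun rho : runT S => (rho t : S)) @^-1` D `&` cyl t X) = \int[mu]_(x in X 0%N) nest kappa t X (fun y : S => (\1_D y)%:E) x).
have -> : (fun rho : runT S => (rho t : S)) @^-1` D `&` cyl t X = cyl t (capLast t X D).
  apply/seteqP; split => rho.
    move=> [/= Dt H] i it; rewrite /capLast; case: eqP => [->|]; last by move=> _; exact: H.
    by split => //; exact: H.
  move=> H; split => /=.
    by have := H t (leqnn t); rewrite /capLast eqxx => -[].
  by move=> i it; have := H i it; rewrite /capLast; case: ifP => // _ [].
rewrite (HP t (capLast_meas t mX mD)).
clear h0 mh h; case: t mc => [|t] mc.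
  rewrite /= /capLast /= integral_mkcondr; apply: eq_integral => x _.
  by rewrite /patch indicE; case: (x \in D).
rewrite /capLast [X in \int[_]_(_ in X) _]/=.
apply: eq_integral => x _.
rewrite tailp_nest1 -/(capLast t.+1 X D) nest_capLast.
by congr (nest _ _ _ _ _); apply/funext => y; rewrite mul1e.
Qed.

End FM.
Section imeas.
Context d (T : measurableType d) (R : realType) (Q : {measure set T -> \bar R})
  (h : T -> \bar R).
Local Open Scope ereal_scope.
Definition imeas (h0 : forall x, 0 <= h x) (mh : measurable_fun setT h) : set T -> \bar R :=
  fun A => \int[Q]_(x in A) h x.
Context (h0 : forall x, 0 <= h x) (mh : measurable_fun setT h).
Let imeas0 : imeas h0 mh set0 = 0.
Proof. by rewrite /imeas integral_set0. Qed.
Let imeas_ge0 A : 0 <= imeas h0 mh A.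
Proof. by apply: integral_ge0 => x _. Qed.
Let imeas_sigma_additive : semi_sigma_additive (imeas h0 mh).
Proof.
move=> F mF tF mUF; rewrite /imeas ge0_integral_bigcup//; last first.
  exact: measurable_funTS.
apply/cvg_closeP; split.
  by apply: is_cvg_nneseries => n _ _; exact: integral_ge0.
by rewrite closeE.
Qed.
HB.instance Definition _ := isMeasure.Build _ _ _
  (imeas h0 mh) imeas0 imeas_ge0 imeas_sigma_additive.
End imeas.

Section concat.
Context d (S : measurableType d) (R : realType) (kappa : R.-pker S ~> S).

Definition concat (t : nat) (C D : nat -> set S) : nat -> set S :=
  fun i => if (i < t)%N then C i else D (i - t)%N.

Lemma pre_shift_cyl t C j D :
  pre t C `&` shiftset t (cyl j D) = cyl (t + j) (concat t C D).
Proof.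
apply/seteqP; split.
- move=> rho [Hc Hd] i ile; rewrite /concat; case: ltnP => [it|ti]; first exact: Hc.
  have := Hd (i - t)%N; rewrite /Defs.suffix subnK//; apply.
  by rewrite leq_subLR.
- move=> rho H; have {}H : forall i, (i <= t + j)%N -> concat t C D i (rho i) := H.
  split.
    move=> i it; have := H i (ltnW (leq_trans it (leq_addr j t))).
    by rewrite /concat it.
  move=> i ij; have := H (i + t)%N; rewrite /concat ltnNge leq_addl /= addnK; apply.
  by rewrite addnC leq_add2l.
Qed.

Lemma cyl_concat t C D :
  cyl t (concat t C D) = pre t C `&` [set rho | D 0%N (rho t)].
Proof.
apply/seteqP; split.
- move=> rho H; split.
    by move=> i it; have := H i (ltnW it); rewrite /concat it.
  by have := H t (leqnn t); rewrite /concat ltnn subnn.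
- move=> rho [Hc Hd] i; rewrite leq_eqVlt => /orP[/eqP ->|it].
    by rewrite /concat ltnn subnn.
  by rewrite /concat it; exact: Hc.
Qed.

Lemma concat_shift t C D : (fun i => concat t C D (i + t)%N) = D.
Proof. by apply/funext => i; rewrite /concat ltnNge leq_addl /= addnK. Qed.

Lemma pre_succ t (C : nat -> set S) j (D : nat -> set S) :
  pre t.+1 C `&` shiftset t (cyl j D) =
  pre t C `&` shiftset t (cyl j (fun i => if i == 0%N then C t `&` D 0%N else D i)).
Proof.
apply/seteqP; split.
- move=> rho [Hc Hd]; split.
    by move=> i it; apply: Hc; exact: ltnW.
  move=> i ij; case: eqP => [i0|_]; last exact: Hd.
  subst i; split; last exact: Hd.
  by have := Hc t (ltnSn t); rewrite /Defs.suffix add0n.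
- move=> rho [Hc Hd]; split.
    move=> i; rewrite ltnS leq_eqVlt => /orP[/eqP ->|it]; last exact: Hc.
    by have := Hd 0%N (leq0n j); rewrite eqxx /Defs.suffix add0n => -[].
  by move=> i ij; have := Hd i ij; case: eqP => // -> [].
Qed.

Lemma tailp_eq j (A A' : nat -> set S) : (forall i, (0 < i)%N -> A i = A' i) ->
  tailp kappa j A = tailp kappa j A'.
Proof.
elim: j A A' => [|j IH] A A' H //; apply/funext => s /=.
rewrite (H 1%N)// (IH (shiftA A) (shiftA A'))// => i _.
exact: H.
Qed.

End concat.
Section ML.
Context d (S : measurableType d) (R : realType) (kappa : R.-pker S ~> S).
Context (mu : probability S R) (P : probability (runT S) R)
  (HP : is_run_measure kappa mu P).
Local Open Scope ereal_scope.

Definition histG t : set (set (runT S)) :=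
  [set H | exists C : nat -> set S, (forall i, measurable (C i)) /\ H = pre t C].

Lemma histG_meas t : histG t `<=` measurable.
Proof. by move=> _ [C [mC ->]]; exact: meas_pre. Qed.

Lemma histG_T t : histG t setT.
Proof.
exists (fun _ => setT); split => //.
by apply/seteqP; split => rho.
Qed.

Lemma histG_setI t : setI_closed (histG t).
Proof.
move=> _ _ [C [mC ->]] [C' [mC' ->]]; exists (fun i => C i `&` C' i); split.
  by move=> i; exact: measurableI.
apply/seteqP; split => rho.
  by move=> [H1 H2] i it; split; [exact: H1|exact: H2].
by move=> H; split => i it; have [] := H i it.
Qed.

Lemma meas_shift_cyl t j (D : nat -> set S) : (forall i, measurable (D i)) ->
  measurable (shiftset t (cyl j D) : set (runT S)).
Proof.
move=> mD; have := pre_shift_cyl t (fun _ => setT) j D.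
have -> : pre t (fun _ => @setT S) = setT by apply/seteqP; split.
rewrite setTI => ->; apply: meas_cyl => i; rewrite /concat; case: ifP => //.
Qed.

Lemma ML t j (D : nat -> set S) (mD : forall i, measurable (D i)) (G : set (runT S)) :
  <<s histG t.+1 >> G ->
  P (G `&` shiftset t (cyl j D)) =
  \int[P]_(rho in G) ((tailp kappa j D) \_ (D 0%N)) (rho t).
Proof.
move=> HG.
set h := fun rho : runT S => ((tailp kappa j D) \_ (D 0%N)) (rho t).
have h0 x : 0 <= h x by rewrite /h /patch; case: ifP => // _; exact: tailp_ge0.
have mh : measurable_fun setT h.
  apply: (measurableT_comp (f := (tailp kappa j D) \_ (D 0%N))); last exact: meas_eval.
  by apply/(measurable_restrictT _ (mD 0%N)); apply: measurable_funTS; exact: tailp_meas.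
have mW := meas_shift_cyl t j mD.
have := @g_sigma_algebra_measure_unique _ R (runT S) (histG t.+1) (@histG_meas t.+1)
   (fun _ => setT) (fun _ => histG_T t.+1) _ (mrestr P mW) (imeas P h0 mh) (@histG_setI t.+1).
apply => //.
- by apply/seteqP; split => // x _; exists 0%N.
- move=> _ [C [mC ->]].
  change (P (pre t.+1 C `&` shiftset t (cyl j D)) = \int[P]_(x in pre t.+1 C) h x).
  rewrite pre_succ pre_shift_cyl (FM HP); last first.
    move=> i; rewrite /concat; case: ifP => _ //; case: eqP => _ //; exact: measurableI.
  rewrite concat_shift cyl_concat.
  have -> : pre t.+1 C = pre t C `&` [set rho | C t (rho t)].
    apply/seteqP; split.
      by move=> rho H; split; [move=> i it; apply: H; exact: ltnW|exact: H].
    move=> rho [H1 H2] i; rewrite ltnS leq_eqVlt => /orP[/eqP ->//|]; exact: H1.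
  rewrite !integral_mkcondr; apply: eq_integral => rho _.
  rewrite /patch /h /patch /=.
  rewrite (@tailp_eq _ _ _ kappa j _ D); last by move=> i; case: i.
  case: (pselect (C t (rho t))) => Ct; case: (pselect (D 0%N (rho t))) => D0.
  - by rewrite (@mem_set _ [set rho0 | C t (rho0 t) /\ D 0%N (rho0 t)] rho)// (@mem_set _ [set rho0 | C t (rho0 t)] rho)// mem_set.
  - rewrite (@memNset _ [set rho0 | C t (rho0 t) /\ D 0%N (rho0 t)] rho); last by case.
    by rewrite (@mem_set _ [set rho0 | C t (rho0 t)] rho)// memNset.
  - rewrite (@memNset _ [set rho0 | C t (rho0 t) /\ D 0%N (rho0 t)] rho); last by case.
    by rewrite (@memNset _ [set rho0 | C t (rho0 t)] rho).
  - rewrite (@memNset _ [set rho0 | C t (rho0 t) /\ D 0%N (rho0 t)] rho); last by case.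
    by rewrite (@memNset _ [set rho0 | C t (rho0 t)] rho).
- move=> _; change (P (setT `&` shiftset t (cyl j D)) < +oo).
  by apply: (@le_lt_trans _ _ 1%E); [apply: probability_le1; exact: measurableI|exact: ltry].
Qed.

End ML.
Lemma ediv_helper (R : realType) (a b c : R) : b != 0 -> c != 0 ->
  ((a%:E * (c^-1)%:E) / (b%:E * (c^-1)%:E))%E = (a%:E * (b^-1)%:E)%E.
Proof.
move=> hb hc; rewrite -!EFinM inver mulf_eq0 invr_eq0 (negbTE hb) (negbTE hc) /= -EFinM.
have -> : a / c / (b / c) = a / b by field; rewrite hb hc.
by [].
Qed.

Section condd.
Context d (S : measurableType d) (R : realType) (kappa : R.-pker S ~> S).
Context (mu : probability S R) (P : probability (runT S) R)
  (HP : is_run_measure kappa mu P).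
Context (Pr : probability S R -> probability (runT S) R)
  (HPr : forall nu : probability S R, is_run_measure kappa nu (Pr nu)).
Local Open Scope ereal_scope.

Definition condd (G : set (runT S)) (mG : measurable G) (t : nat) : probability S R :=
  mnormalize (pushev (mrestr P mG) t) mu.

Lemma pushev_setT (G : set (runT S)) (mG : measurable G) t :
  pushev (mrestr P mG) t setT = P G.
Proof. by rewrite /pushev /= /mrestr preimage_setT setTI. Qed.

Lemma condd_E (G : set (runT S)) (mG : measurable G) t (hG : 0 < P G) U :
  condd mG t U = P ((fun rho : runT S => (rho t : S)) @^-1` U `&` G) * ((fine (P G))^-1)%:E.
Proof.
rewrite /condd.
change ((let evidence := pushev (mrestr P mG) t setT in
  if (evidence == 0) || (evidence == +oo) then fun U => mu U
  else fun U => pushev (mrestr P mG) t U * ((fine evidence)^-1)%:E) U =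
  P ((fun rho : runT S => (rho t : S)) @^-1` U `&` G) * ((fine (P G))^-1)%:E).
rewrite pushev_setT /=.
have -> : (P G == 0) = false by apply/negbTE; rewrite gt_eqF.
have -> : (P G == +oo) = false.
  apply/negbTE; rewrite lt_eqF//; apply: (@le_lt_trans _ _ 1%E); [exact: probability_le1|exact: ltry].
by [].
Qed.


Lemma condd_int (G : set (runT S)) (mG : measurable G) t (hG : 0 < P G)
  (Y0 : set S) (mY0 : measurable Y0) (f : S -> \bar R) :
  (forall x, 0 <= f x) -> measurable_fun setT f ->
  \int[condd mG t]_(x in Y0) f x =
  ((fine (P G))^-1)%:E * \int[P]_(rho in G) (f \_ Y0) (rho t).
Proof.
move=> f0 mf.
have c0 : (0 <= (fine (P G))^-1)%R by rewrite invr_ge0 fine_ge0.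
have fY0 x : 0 <= (f \_ Y0) x by rewrite /patch; case: ifP.
have mfY : measurable_fun setT (f \_ Y0).
  by apply/(measurable_restrictT _ mY0); exact: measurable_funTS.
rewrite integral_mkcond.
transitivity (\int[mscale (NngNum c0) (pushev (mrestr P mG) t)]_x (f \_ Y0) x).
  apply: eq_measure_integral => A mA _.
  transitivity (P ((fun rho : runT S => (rho t : S)) @^-1` A `&` G) * ((fine (P G))^-1)%:E).
    exact: condd_E.
  by rewrite muleC.
rewrite ge0_integral_mscale//; congr (_ * _).
rewrite integral_pushev// integral_mrestr// ?setTI//.
exact: (measurableT_comp mfY (@meas_eval _ S t)).
Qed.

Lemma histG_sub t : <<s histG t >> `<=` (measurable : set (set (runT S))).
Proof. apply: smallest_sub; [exact: sigma_algebra_measurable|exact: histG_meas]. Qed.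

Lemma NU t (G : set (runT S)) (HG : <<s histG t.+1 >> G) (mG : measurable G) (hG : 0 < P G)
  N (Y : nat -> set S) (mY : forall i, measurable (Y i)) :
  Pr (condd mG t) (cyl N Y) = P (G `&` shiftset t (cyl N Y)) * ((fine (P G))^-1)%:E.
Proof.
rewrite (HPr _ N mY) condd_int//; last 2 first.
- by move=> x; exact: tailp_ge0.
- exact: tailp_meas.
by rewrite (ML HP)// muleC.
Qed.

End condd.
Lemma ediv_helper2 (R : realType) (a b : \bar R) (c : R) :
  a \is a fin_num -> b \is a fin_num -> fine b != 0%R -> c != 0%R ->
  ((a * (c^-1)%:E) / (b * (c^-1)%:E))%E = (a * ((fine b)^-1)%:E)%E.
Proof.
by move: a b => [a| |] [b| |] // _ _ /= hb hc; rewrite ediv_helper.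
Qed.

Section evG.
Context d (S : measurableType d).

Lemma evG_cyl (C : set S) : evG C = \bigcap_N cyl N (fun _ => C).
Proof.
apply/seteqP; split => rho.
  by move=> H N _ j _; exact: H.
by move=> H k; exact: (H k I k (leqnn k)).
Qed.

Lemma meas_evG (C : set S) : measurable C -> measurable (evG C : set (runT S)).
Proof. by move=> mC; rewrite evG_cyl; apply: bigcapT_measurable => N; exact: meas_cyl. Qed.

Lemma shift_evG t (C : set S) :
  shiftset t (evG C) = \bigcap_N shiftset t (cyl N (fun _ => C)).
Proof.
apply/seteqP; split => rho.
  by move=> H N _ j _; exact: H.
by move=> H k; exact: (H k I k (leqnn k)).
Qed.

Lemma meas_shift_evG t (C : set S) : measurable C ->
  measurable (shiftset t (evG C) : set (runT S)).
Proof.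
move=> mC; rewrite shift_evG; apply: bigcapT_measurable => N.
exact: meas_shift_cyl.
Qed.

Lemma histG_mono a b : (a <= b)%N -> <<s @histG _ S a >> `<=` <<s @histG _ S b >>.
Proof.
move=> ab; apply: sub_sigma_algebra2 => _ [C [mC ->]].
exists (fun i => if (i < a)%N then C i else setT); split.
  by move=> i; case: ifP.
apply/seteqP; split => rho H i hi.
  by case: ifP => // ia; exact: H.
by have := H i (leq_trans hi ab); rewrite hi.
Qed.

Lemma histG_shift t j (D : nat -> set S) : (forall i, measurable (D i)) ->
  <<s @histG _ S (t + j).+1 >> (shiftset t (cyl j D)).
Proof.
move=> mD; apply: sub_sigma_algebra.
exists (concat t (fun _ => setT) D); split.
  by move=> i; rewrite /concat; case: ifP.
rewrite pre_cyl -pre_shift_cyl.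
by rewrite (_ : pre t _ = setT) ?setTI//; apply/seteqP; split.
Qed.

Lemma histG_I k (A B : set (runT S)) : <<s @histG _ S k >> A -> <<s @histG _ S k >> B ->
  <<s @histG _ S k >> (A `&` B).
Proof.
pose GT : measurableType _ := g_sigma_algebraType (@histG _ S k).
move=> hA hB; exact: (@measurableI _ GT).
Qed.

Lemma evF_evG (B : set S) : evF B = ~` evG (~` B).
Proof.
apply/seteqP; split => rho.
  by move=> [k Bk] H; exact: (H k).
move=> /existsNP [k /contrapT Bk]; by exists k.
Qed.

End evG.
Lemma fin_prob d (T : measurableType d) (R : realType) (Q : probability T R) (X : set T) :
  measurable X -> (Q X \is a fin_num)%E.
Proof.
by move=> mX; rewrite ge0_fin_numE ?measure_ge0// (le_lt_trans (probability_le1 _ mX)) ?ltry.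
Qed.

Section MB.
Context d (S : measurableType d) (R : realType) (kappa : R.-pker S ~> S).
Context (Pr : probability S R -> probability (runT S) R)
  (HPr : forall nu : probability S R, is_run_measure kappa nu (Pr nu)).
Context (mu0 : probability S R).
Context (B : set S) (mB : measurable B) (n : nat) (A : nat -> set S)
  (mA : forall j, (j <= n)%N -> measurable (A j)) (p : R)
  (hyp : forall (nu nuA : probability S R),
      (0 < Pr nu (cyl n A))%E ->
      is_cond_dist n A (Pr nu) nuA ->
      (p%:E <= Pr nuA (evF B))%E).
Local Open Scope ereal_scope.

Let P := Pr mu0.
Let HP := HPr mu0.

Lemma MB t (G : set (runT S)) : <<s histG t.+1 >> G ->
  P (G `&` shiftset t (cyl n A) `&` shiftset (t + n) (evG (~` B))) <=
  (1 - p)%:E * P (G `&` shiftset t (cyl n A)).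
Proof.
move=> HG.
have mAp : forall j, measurable (padA n A j) := padA_meas mA.
have cylA : cyl n A = cyl n (padA n A) by rewrite cyl_pad.
set G' := G `&` shiftset t (cyl n A).
have HG' : <<s histG (t + n).+1 >> G'.
  apply: histG_I; first by apply: (histG_mono _ HG); rewrite ltnS leq_addr.
  by rewrite cylA; exact: histG_shift.
have mG := histG_sub HG.
have mG' := histG_sub HG'.
have mE : measurable (shiftset (t + n) (evG (~` B)) : set (runT S)).
  by apply: meas_shift_evG; exact: measurableC.
have mG'E := measurableI _ _ mG' mE.
have PG'le1 : P G' < +oo.
  by apply: (@le_lt_trans _ _ 1%E); [exact: probability_le1|exact: ltry].
have PGle1 : P G < +oo.
  by apply: (@le_lt_trans _ _ 1%E); [exact: probability_le1|exact: ltry].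
have [PG'0|PG'n0] := eqVneq (P G') 0.
  by rewrite PG'0 mule0 -PG'0; apply: le_measure; rewrite ?inE//; try exact: subIsetl.
have PG'pos : 0 < P G' by rewrite lt_neqAle eq_sym PG'n0 measure_ge0.
have PGpos : 0 < P G.
  by apply: (lt_le_trans PG'pos); apply: le_measure; rewrite ?inE//; try exact: subIsetl.
have fPG : (0 < fine (P G))%R by apply: fine_gt0; rewrite PGpos PGle1.
have fPG' : (0 < fine (P G'))%R by apply: fine_gt0; rewrite PG'pos PG'le1.
set nu := condd mu0 P mG t.
set nuA := condd mu0 P mG' (t + n).
have Hnu : Pr nu (cyl n A) = P G' * ((fine (P G))^-1)%:E.
  by rewrite cylA (NU HP HPr HG mG PGpos n mAp) /G' cylA.
have h2 : 0 < Pr nu (cyl n A).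
  by rewrite Hnu mule_gt0// lte_fin invr_gt0.
have h3 : is_cond_dist n A (Pr nu) nuA.
  move=> C mC.
  have E1 : cyl n (capLast n A C) = cyl n (capLast n (padA n A) C).
    apply/seteqP; split => rho H j jn; have := H j jn;
      by rewrite /capLast /padA jn.
  have E2 : G `&` shiftset t (cyl n (capLast n (padA n A) C)) =
      (fun rho : runT S => (rho (t + n)%N : S)) @^-1` C `&` G'.
    apply/seteqP; split => rho.
      move=> [Gr H]; split; last split => //.
        by have := H n (leqnn n); rewrite /capLast eqxx /Defs.suffix addnC => -[].
      move=> j jn; have := H j jn; rewrite /capLast /padA jn.
      by case: ifP => // _ [].
    move=> [Cr [Gr H]]; split => // j jn.
    have Hj := H j jn.
    rewrite /capLast /padA jn; case: eqP => [jE|_] //.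
    by subst j; split => //; rewrite /Defs.suffix addnC.
  rewrite (condd_E mu0 mG' (t + n) PG'pos C).
  rewrite E1 (NU HP HPr HG mG PGpos n (capLast_meas n mAp mC)) E2 Hnu.
  rewrite ediv_helper2 //.
  - apply: fin_prob; apply: measurableI => //.
    rewrite -(setTI (_ @^-1` _)); exact: (@meas_eval _ S (t + n)%N).
  - exact: fin_prob.
  - by rewrite gt_eqF.
  - by rewrite gt_eqF.
have h4 := hyp h2 h3.
have mEv : measurable (evG (~` B) : set (runT S)) by apply: meas_evG; exact: measurableC.
rewrite evF_evG probability_setC// in h4.
set x := Pr nuA (evG (~` B)) in h4 *.
have x0 : 0 <= x := measure_ge0 _ _.
have x1 : x <= 1 := probability_le1 _ mEv.
have h5 : x <= (1 - p)%:E.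
  have xf : x \is a fin_num := fin_prob _ mEv.
  move: h4; rewrite -(fineK xf) -EFinB !lee_fin => ?; lra.
have cv : (fun N => Pr nuA (cyl N (fun _ => ~` B))) @ \oo --> x.
  rewrite /x evG_cyl; apply: nonincreasing_cvg_mu.
  - apply: (@le_lt_trans _ _ 1%E); last exact: ltry.
    by apply: probability_le1; apply: meas_cyl => _; exact: measurableC.
  - by move=> N; apply: meas_cyl => _; exact: measurableC.
  - by rewrite -evG_cyl; apply: meas_evG; exact: measurableC.
  - move=> a b ab; apply/subsetPset => rho H j jb; apply: H.
    exact: leq_trans jb ab.
set c := fine (P G').
have eqN N : c%:E * Pr nuA (cyl N (fun _ => ~` B)) =
    P (G' `&` shiftset (t + n) (cyl N (fun _ => ~` B))).
  rewrite (NU HP HPr HG' mG' PG'pos N (fun _ => measurableC mB)) muleCA -EFinM.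
  by rewrite mulfV ?gt_eqF// mule1.
have cv2 := cvgeZl (fin_numE c%:E) cv.
apply: (@le_trans _ _ (c%:E * x)).
  rewrite -(cvg_lim _ cv2)//; apply: lime_ge; first by apply/cvg_ex; exists (c%:E * x).
  apply: nearW => N; rewrite eqN; apply: le_measure; rewrite ?inE//.
  - apply: measurableI => //; apply: meas_shift_cyl => _; exact: measurableC.
  - apply: setIS => rho H j _; exact: H.
by rewrite muleC /c fineK ?lee_wpmul2r//; exact: fin_prob.
Qed.

End MB.
Section Final.
Context d (S : measurableType d) (R : realType) (kappa : R.-pker S ~> S).
Context (Pr : probability S R -> probability (runT S) R)
  (HPr : forall nu : probability S R, is_run_measure kappa nu (Pr nu)).
Context (mu0 : probability S R).
Context (B : set S) (mB : measurable B) (n : nat) (A : nat -> set S)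
  (mA : forall j, (j <= n)%N -> measurable (A j)) (p : R) (hp : (0 < p)%R)
  (hyp : forall (nu nuA : probability S R),
      (0 < Pr nu (cyl n A))%E ->
      is_cond_dist n A (Pr nu) nuA ->
      (p%:E <= Pr nuA (evF B))%E).
Local Open Scope ereal_scope.

Let P := Pr mu0.

Definition Er (r : nat) : set (run S) := evG (~` B) `&`
  [set rho | forall m, exists k, [/\ (m <= k)%N, (k %% n.+1)%N = r & cyl n A (Defs.suffix rho k)]].

Let q : R := (1 - Num.min p 1)%R.

Lemma q_ge0 : (0 <= q)%R.
Proof. by rewrite /q subr_ge0 ge_min lexx orbT. Qed.

Lemma q_lt1 : (q < 1)%R.
Proof. by rewrite /q ltrBlDr ltrDl lt_min hp ltr01. Qed.

Lemma q_ge : (1 - p <= q)%R.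
Proof. by rewrite /q lerB// ge_min lexx. Qed.

Lemma cylA_meas t : measurable (shiftset t (cyl n A) : set (runT S)).
Proof. by rewrite -cyl_pad; apply: meas_shift_cyl; exact: padA_meas. Qed.

Lemma mod_gap t' t : (t' < t)%N -> (t' %% n.+1 = t %% n.+1)%N -> (t' + n < t)%N.
Proof.
move=> tt eqm.
have /eqP := eqm; rewrite eq_sym eqn_mod_dvd; last exact: ltnW.
move=> /(dvdn_leq _); rewrite subn_gt0 => /(_ tt).
by rewrite leq_subRL ?addnS// ltnW.
Qed.

Lemma Er_meas r : measurable (Er r : set (runT S)).
Proof.
have -> : Er r = evG (~` B) `&` \bigcap_m \bigcup_k
    (if (m <= k)%N && (k %% n.+1 == r)%N then shiftset k (cyl n A) else set0).
  congr (_ `&` _); apply/seteqP; split => rho.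
    move=> H m _; have [k [mk kr ok]] := H m; exists k => //.
    by rewrite mk kr eqxx.
  move=> H m; have [k _] := H m I; case: ifP => // /andP[mk /eqP kr] ok.
  by exists k.
apply: measurableI; first by apply: meas_evG; exact: measurableC.
apply: bigcapT_measurable => m; apply: bigcupT_measurable => k.
by case: ifP => // _; exact: cylA_meas.
Qed.

Lemma MB2 K (G : set (runT S)) r : <<s histG K >> G ->
  P (Er r `&` G) <= q%:E * P G.
Proof.
move=> HG.
pose cond t' t := [&& (K <= t')%N, (t' < t)%N & (t' %% n.+1 == r)%N].
pose T t : set (runT S) :=
  \bigcap_(t' : nat) (if cond t' t then ~` shiftset t' (cyl n A) else setT).
pose H t : set (runT S) :=
  if (K <= t)%N && (t %% n.+1 == r)%N then G `&` T t else set0.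
pose D t := H t `&` shiftset t (cyl n A).
pose F t := D t `&` shiftset (t + n) (evG (~` B)).
have HH t : <<s histG t.+1 >> (H t).
  pose GT : measurableType _ := g_sigma_algebraType (@histG _ S t.+1).
  rewrite /H; case: ifP => [/andP[Kt /eqP tr]|_]; last exact: (@measurable0 _ GT).
  apply: histG_I; first by apply: (histG_mono _ HG); exact: leqW.
  apply: (@bigcapT_measurable _ GT) => t'; rewrite /cond.
  case: ifP => [/and3P[Kt' t't /eqP t'r]|_]; last exact: (@measurableT _ GT).
  apply: (@measurableC _ GT).
  rewrite -cyl_pad; apply: (histG_mono _ (histG_shift (padA_meas mA))).
  apply: ltnW; apply: mod_gap => //; by rewrite t'r tr.
have mH t : measurable (H t) := histG_sub (HH t).
have mD t : measurable (D t) by apply: measurableI => //; exact: cylA_meas.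
have mEv t : measurable (shiftset (t + n) (evG (~` B)) : set (runT S)).
  by apply: meas_shift_evG; exact: measurableC.
have mF t : measurable (F t) by exact: measurableI.
have mG := histG_sub HG.
have mErG := measurableI _ _ (Er_meas r) mG.
have cover : Er r `&` G `<=` \bigcup_t F t.
  move=> rho [[nB occs] Gr].
  pose Pk k := [&& (K <= k)%N, (k %% n.+1 == r)%N & `[< cyl n A (Defs.suffix rho k) >]].
  have exP : exists k, Pk k.
    have [k [Kk kr ok]] := occs K; exists k.
    by rewrite /Pk Kk kr eqxx /=; apply/asboolP.
  case: (ex_minnP exP) => m /and3P[Km mr /asboolP om] minm.
  exists m => //; split; last by move=> j; exact: nB.
  split => //; rewrite /H Km mr /=; split => // t' _.
  case: ifP => // /and3P[Kt' t'm t'r] ot'.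
  have := minm t'; rewrite /Pk Kt' t'r /= => /(_ (asboolT ot')).
  by rewrite leqNgt t'm.
have triv : trivIset setT D.
  apply/trivIsetP => i j _ _ ij.
  wlog lt_ij : i j ij / (i < j)%N.
    move=> W; case: (ltngtP i j) => [h|h|h]; first exact: W.
      by rewrite setIC; apply: W => //; rewrite eq_sym.
    by move: ij; rewrite h eqxx.
  apply/seteqP; split => // rho [[Hi oi] [Hj oj]].
  move: Hi Hj; rewrite /H.
  case: ifP => [/andP[Ki ir]|_]; last by case.
  case: ifP => [/andP[Kj jr]|_]; last by move=> _ [].
  move=> _ [_ Tj]; have := Tj i I; rewrite /cond Ki lt_ij ir /=.
  by apply.
apply: (le_trans (measure_sigma_subadditive P mF mErG cover)).
apply: (@le_trans _ _ (\sum_(0 <= t <oo) (q%:E * P (D t)))).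
  apply: lee_nneseries => [t _ _|t _]; first exact: measure_ge0.
  apply: (le_trans (MB HPr mu0 mB mA hyp (HH t))).
  by apply: lee_wpmul2r; [exact: measure_ge0|rewrite lee_fin q_ge].
rewrite nneseriesZl; last by move=> t _; exact: measure_ge0.
have mUD : measurable (\bigcup_t D t) by exact: bigcupT_measurable.
have -> : \sum_(0 <= t <oo) P (D t) = P (\bigcup_t D t).
  by apply/cvg_lim => //; apply: measure_semi_sigma_additive.
apply: lee_wpmul2l; first by rewrite lee_fin q_ge0.
apply: le_measure; rewrite ?inE//.
move=> rho [t _ [Ht _]]; move: Ht; rewrite /H; case: ifP => _; [by case|by []].
Qed.

Lemma Er_zero r : P (Er r) = 0.
Proof.
pose M := [set G : set (runT S) | measurable G /\ P (Er r `&` G) <= q%:E * P G].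
pose Alg := [set G : set (runT S) | exists K, <<s histG K >> G].
have ringA : setring Alg.
  split.
  - by exists 0%N; exact: sigma_algebra0.
  - move=> X Y [K1 h1] [K2 h2]; exists (maxn K1 K2).
    pose GT : measurableType _ := g_sigma_algebraType (@histG _ S (maxn K1 K2)).
    apply: (@measurableU _ GT).
      by apply: (histG_mono _ h1); exact: leq_maxl.
    by apply: (histG_mono _ h2); exact: leq_maxr.
  - move=> X Y [K1 h1] [K2 h2]; exists (maxn K1 K2).
    pose GT : measurableType _ := g_sigma_algebraType (@histG _ S (maxn K1 K2)).
    apply: (@measurableD _ GT).
      by apply: (histG_mono _ h1); exact: leq_maxl.
    by apply: (histG_mono _ h2); exact: leq_maxr.
have mEr := Er_meas r.
have monM : monotone M.
  split.
  - move=> F ndF MF; split; first by apply: bigcupT_measurable => i; exact: (MF i).1.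
    have c1 : (fun i => P (Er r `&` F i)) @ \oo --> P (Er r `&` \bigcup_i F i).
      rewrite setI_bigcupr; apply: (@nondecreasing_cvg_mu _ (runT S) R P (fun i => Er r `&` F i)).
      + by move=> i; apply: measurableI => //; exact: (MF i).1.
      + by apply: bigcupT_measurable => i; apply: measurableI => //; exact: (MF i).1.
      + move=> a b ab; apply/subsetPset; apply: setIS; exact/subsetPset/ndF.
    have c2 : (fun i => P (F i)) @ \oo --> P (\bigcup_i F i).
      apply: nondecreasing_cvg_mu => //.
      + by move=> i; exact: (MF i).1.
      + by apply: bigcupT_measurable => i; exact: (MF i).1.
    rewrite -(cvg_lim _ c1)// -(cvg_lim _ c2)// -limeMl//; last by apply/cvg_ex; eexists; exact: c2.
    apply: lee_lim.
    + by apply/cvg_ex; eexists; exact: c1.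
    + by apply: is_cvgeZl => //; apply/cvg_ex; eexists; exact: c2.
    + by apply: nearW => i; exact: (MF i).2.
  - move=> F niF MF; split; first by apply: bigcapT_measurable => i; exact: (MF i).1.
    have c1 : (fun i => P (Er r `&` F i)) @ \oo --> P (Er r `&` \bigcap_i F i).
      rewrite -bigcapIr; last by exists 0%N.
       apply: (@nonincreasing_cvg_mu _ (runT S) R P (fun i => Er r `&` F i)).
      + by apply: (@le_lt_trans _ _ 1%E); [apply: probability_le1; apply: measurableI => //; exact: (MF 0%N).1|exact: ltry].
      + by move=> i; apply: measurableI => //; exact: (MF i).1.
      + by apply: bigcapT_measurable => i; apply: measurableI => //; exact: (MF i).1.
      + move=> a b ab; apply/subsetPset; apply: setIS; exact/subsetPset/niF.
    have c2 : (fun i => P (F i)) @ \oo --> P (\bigcap_i F i).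
      apply: nonincreasing_cvg_mu => //.
      + by apply: (@le_lt_trans _ _ 1%E); [apply: probability_le1; exact: (MF 0%N).1|exact: ltry].
      + by move=> i; exact: (MF i).1.
      + by apply: bigcapT_measurable => i; exact: (MF i).1.
    rewrite -(cvg_lim _ c1)// -(cvg_lim _ c2)// -limeMl//; last by apply/cvg_ex; eexists; exact: c2.
    apply: lee_lim.
    + by apply/cvg_ex; eexists; exact: c1.
    + by apply: is_cvgeZl => //; apply/cvg_ex; eexists; exact: c2.
    + by apply: nearW => i; exact: (MF i).2.
have AM : Alg `<=` M.
  move=> G [K hG]; split; first exact: histG_sub hG.
  exact: MB2 hG.
have sub := monotone_setring_sub_g_sigma_ring monM ringA AM.
have sA : sigma_algebra setT <<sr Alg>>.
  have [s0 sD sU] := smallest_sigma_ring Alg.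
  split => // X hX; apply: sD => //; apply: sub_g_sigma_ring; exists 0%N.
  exact: (@measurableT _ (g_sigma_algebraType (@histG _ S 0))).
have cylsub : <<s @cylinders _ S >> `<=` <<sr Alg>>.
  apply: smallest_sub => // C [k [A0 [mA0 ->]]]; apply: sub_g_sigma_ring.
  by exists k.+1; apply: sub_sigma_algebra; exists A0; split => //; rewrite pre_cyl.
have [_ h] := sub _ (cylsub _ mEr).
rewrite setIid in h.
have f := fin_prob P mEr.
move: h; rewrite -(fineK f) -EFinM lee_fin => h.
apply/eqP; rewrite eqe; apply/eqP.
have h0 : (0 <= fine (P (Er r)))%R by rewrite fine_ge0// measure_ge0.
have := q_lt1; have := q_ge0; nra.
Qed.

End Final.
Unset Implicit Arguments.
Theorem mainTheorem2 (d : measure_display) (S : measurableType d) (R : realType)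
  (kappa : R.-pker S ~> S)
  (Pr : probability S R -> probability (runT S) R)
  (HPr : forall mu : probability S R, is_run_measure kappa mu (Pr mu))
  (B : set S) (mB : measurable B)
  (n : nat) (A : nat -> set S) (mA : forall j, (j <= n)%N -> measurable (A j))
  (p : R) (hp : 0 < p)
  (hyp : forall (nu nuA : probability S R),
      (0 < Pr nu (cyl n A))%E ->
      is_cond_dist n A (Pr nu) nuA ->
      (p%:E <= Pr nuA (evF B))%E) :
  forall mu : probability S R,
    Pr mu (evG (~` B) `&` evGF (cyl n A)) = 0%E.
Proof.
move=> mu.
have mE : measurable (evG (~` B) `&` evGF (cyl n A) : set (runT S)).
  have -> : evGF (cyl n A) = \bigcap_m \bigcup_k
      (if (m <= k)%N then shiftset k (cyl n A) else set0).
    apply/seteqP; split => rho.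
      by move=> H m _; have [k mk ok] := H m; exists k => //; rewrite mk.
    by move=> H m; have [k _] := H m I; case: ifP => // mk ok; exists k.
  apply: measurableI; first by apply: meas_evG; exact: measurableC.
  apply: bigcapT_measurable => m; apply: bigcupT_measurable => k.
  by case: ifP => // _; exact: cylA_meas.
have cover : evG (~` B) `&` evGF (cyl n A) `<=` \bigcup_r Er B n A r.
  move=> rho [nB inf].
  apply: contrapT => Hno.
  have Hm : forall r, exists m, forall k, (m <= k)%N -> (k %% n.+1)%N = r ->
      ~ cyl n A (Defs.suffix rho k).
    move=> r; apply: contrapT => Hr; apply: Hno; exists r => //; split => // m.
    apply: contrapT => Hk; apply: Hr; exists m => k mk kr ok; apply: Hk; exists k.
    by split.
  case: (choice Hm) => f Hf.
  pose M := \max_(i < n.+1) f i.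
  have [k Mk ok] := inf M.
  apply: (Hf (k %% n.+1)%N k) => //.
  apply: leq_trans Mk.
  exact: (leq_bigmax (F := fun i : 'I_n.+1 => f (nat_of_ord i)) (Ordinal (ltn_pmod k (ltn0Sn n)))).
have := measure_sigma_subadditive (Pr mu) (fun r => Er_meas mB mA r) mE cover.
rewrite (eq_eseriesr (fun r _ => Er_zero HPr mu mB mA hp hyp r)) eseries0// => h.
by apply/eqP; rewrite eq_le h measure_ge0.
Qed.
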